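(* Let $\mathbf{S}=\mathbf{V}\boldsymbol{\Lambda}\mathbf{V}^{\mathsf{H}}$ and $\hat{\mathbf{S}}$ be $N\times N$ graph shift operators, and let $\mathbf{h}$ be an integral Lipschitz filter with integral Lipschitz constant $C$. Assume there exists a relative perturbation matrix $\mathbf{E}=\mathbf{U}\mathbf{M}\mathbf{U}^{\mathsf{H}}\in\mathcal{E}(\mathbf{S},\hat{\mathbf{S}})$ with $d(\mathbf{S},\hat{\mathbf{S}})\le\|\mathbf{E}\|\le\varepsilon$ that furthermore satisfies $$\min\left[\left\|\frac{\mathbf{E}}{\|\mathbf{E}\|}-\mathbf{I}\right\|,\ \left\|\frac{\mathbf{E}}{\|\mathbf{E}\|}+\mathbf{I}\right\|\right]\le\varepsilon.$$ Then $$\|\mathbf{H}(\mathbf{S})-\mathbf{H}(\hat{\mathbf{S}})\|_{\mathcal{P}}\le 2C\varepsilon+\mathcal{O}(\varepsilon^2).$$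
   Context: A graph shift operator is a real symmetric $N\times N$ matrix; $\mathbf{S}=\mathbf{V}\boldsymbol{\Lambda}\mathbf{V}^{\mathsf{H}}$ with $\mathbf{V}$ orthonormal eigenvectors and $\boldsymbol{\Lambda}$ diagonal; $\mathbf{E}$ is symmetric with $\mathbf{U}$ orthonormal and $\mathbf{M}$ diagonal. $\|\cdot\|$ denotes the spectral norm (Euclidean norm for vectors). $\mathcal{P}$ is the set of $N\times N$ permutation matrices. $\mathcal{E}(\mathbf{S},\hat{\mathbf{S}})=\{\mathbf{E}:\mathbf{P}^{\mathsf{T}}\hat{\mathbf{S}}\mathbf{P}=\mathbf{S}+(\mathbf{E}\mathbf{S}+\mathbf{S}\mathbf{E})\text{ for some }\mathbf{P}\in\mathcal{P}\}$, and $d(\mathbf{S},\hat{\mathbf{S}})=\min\{\|\mathbf{E}\|:\mathbf{P}\in\mathcal{P},\ \mathbf{P}^{\mathsf{T}}\hat{\mathbf{S}}\mathbf{P}=\mathbf{S}+\mathbf{E}\mathbf{S}+\mathbf{S}\mathbf{E}\}$. For linear operators, $\|\mathbf{A}-\hat{\mathbf{A}}\|_{\mathcal{P}}=\min_{\mathbf{P}\in\mathcal{P}}\max_{\|\mathbf{x}\|=1}\|\mathbf{P}^{\mathsf{T}}(\mathbf{A}\mathbf{x})-\hat{\mathbf{A}}(\mathbf{P}^{\mathsf{T}}\mathbf{x})\|$. A filter $\mathbf{h}=\{h_k\}_{k\ge0}$ defines $\mathbf{H}(\mathbf{S})=\sum_k h_k\mathbf{S}^k$ and frequency response $h(\lambda)=\sum_k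 h_k\lambda^k$ (analytic), with $|h(\lambda)|\le1$; it is integral Lipschitz with constant $C>0$ if $|h(\lambda_2)-h(\lambda_1)|\le C\,\frac{|\lambda_2-\lambda_1|}{|\lambda_1+\lambda_2|/2}$ for all $\lambda_1,\lambda_2$. $\mathcal{O}(\varepsilon^2)$ denotes a term bounded by a constant times $\varepsilon^2$. *)

(* Defs.v *)
From HB Require Import structures.
From mathcomp Require Import all_boot all_order all_algebra all_fingroup.
From mathcomp Require Import all_classical all_reals all_analysis.
Set Implicit Arguments. Unset Strict Implicit. Unset Printing Implicit Defensive.
Import Order.TTheory GRing.Theory Num.Theory.
Import numFieldNormedType.Exports.
Local Open Scope classical_set_scope.
Local Open Scope ring_scope.

Section Defs.
Variable R : realType.

Definition symmetric_mx N (A : 'M[R]_N) : Prop := A^T = A.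

(* Orthonormal (real orthogonal) matrix: V^H V = I (V^H = V^T over R). *)
Definition orthonormal_mx N (V : 'M[R]_N) : Prop := V^T *m V = 1%:M.

Definition enorm N (x : 'cV[R]_N) : R := Num.sqrt (\sum_i (x i 0) ^+ 2).

Definition specnorm N (A : 'M[R]_N) : R :=
  sup [set enorm (A *m x) | x in [set x : 'cV[R]_N | enorm x = 1]].

Definition perm_dist N (A Ahat : 'M[R]_N) : R :=
  inf [set sup [set enorm ((perm_mx s)^T *m (A *m x) - Ahat *m ((perm_mx s)^T *m x))
               | x in [set x : 'cV[R]_N | enorm x = 1]]
       | s in [set: 'S_N]].

Definition rel_pert_set N (S Shat : 'M[R]_N) : set 'M[R]_N :=
  [set E | exists s : 'S_N,
     (perm_mx s)^T *m Shat *m perm_mx s = S + (E *m S + S *m E)].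

Definition rel_pert_dist N (S Shat : 'M[R]_N) : R :=
  inf [set specnorm E | E in rel_pert_set S Shat].

Definition freq_resp (h : nat -> R) (l : R) : R :=
  limn (series (fun k => h k * l ^+ k)).

Definition graph_filter N (h : nat -> R) (S : 'M[R]_N) : 'M[R]_N :=
  \matrix_(i, j) limn (series (fun k => h k * (S ^+ k) i j)).

Definition analytic_filter (h : nat -> R) : Prop :=
  forall l : R, cvgn (series (fun k => h k * l ^+ k)).

Definition bounded_filter (h : nat -> R) : Prop :=
  forall l : R, `|freq_resp h l| <= 1.

(* Integral Lipschitz with constant C, written multiplicatively:
   |h(l2) - h(l1)| * (|l1 + l2| / 2) <= C * |l2 - l1|. *)
Definition integral_lipschitz (h : nat -> R) (C : R) : Prop :=
  0 < C /\
  forall l1 l2 : R,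
    `|freq_resp h l2 - freq_resp h l1| * (`|l1 + l2| / 2) <= C * `|l2 - l1|.

End Defs.

(* Main.v *)
Require Import Defs.
From HB Require Import structures.
From mathcomp Require Import all_boot all_order all_algebra all_fingroup.
From mathcomp Require Import all_classical all_reals all_analysis.
From mathcomp Require Import complex ring lra.
Import Order.TTheory GRing.Theory Num.Theory.
Import numFieldNormedType.Exports.
Local Open Scope classical_set_scope.
Local Open Scope ring_scope.
Set Implicit Arguments. Unset Strict Implicit. Unset Printing Implicit Defensive.

Section PartA.
Local Open Scope sesquilinear_scope.
Variable R : realType.
Local Notation C := (R[i]).
Local Notation phi := (real_complex R).

Definition nrm2 N (z : 'cV[C]_N) : C := \sum_i `|z i 0| ^+ 2.

Lemma nrm2E N (z : 'cV[C]_N) : nrm2 z = (map_mx Num.conj z^T *m z) 0 0.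
Proof. by rewrite /nrm2 !mxE; apply: eq_bigr => i _; rewrite !mxE normCK mulrC. Qed.

Lemma nrm2_unitary N (Q : 'M[C]_N) (z : 'cV[C]_N) :
  map_mx Num.conj Q^T *m Q = 1%:M -> nrm2 (Q *m z) = nrm2 z.
Proof.
move=> HQ; rewrite !nrm2E trmx_mul map_mxM mulmxA -(mulmxA _ (map_mx Num.conj Q^T)) HQ mulmx1.
by [].
Qed.

Lemma nrm2_diag N (a : 'rV[C]_N) (z : 'cV[C]_N) :
  nrm2 (diag_mx a *m z) = \sum_l `|a 0 l| ^+ 2 * `|z l 0| ^+ 2.
Proof.
by rewrite /nrm2; apply: eq_bigr => l _; rewrite mul_diag_mx mxE normrM exprMn.
Qed.

Lemma phi_real (r : R) : (phi r : C) \is Num.real.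
Proof. by apply/complex_realP; exists r. Qed.

Lemma nrm2_real N (y : 'cV[R]_N) : nrm2 (map_mx phi y) = phi (\sum_i (y i 0) ^+ 2).
Proof.
rewrite rmorph_sum /nrm2; apply: eq_bigr => i _; rewrite mxE rmorphXn /=.
by rewrite real_normK ?phi_real.
Qed.

Lemma enorm_sq N (y : 'cV[R]_N) : enorm y ^+ 2 = \sum_i (y i 0) ^+ 2.
Proof. by rewrite /enorm sqr_sqrtr // sumr_ge0 // => i _; exact: sqr_ge0. Qed.


Lemma diag_pow N (d : 'rV[C]_N) k :
  diag_mx d ^+ k = diag_mx (\row_l (d 0 l ^+ k)).
Proof.
elim: k => [|k IH].
  by rewrite expr0; apply/matrixP => i j; rewrite !mxE expr0.
by rewrite exprS IH -mulmxE mulmx_diag; congr diag_mx; apply/rowP => l; rewrite !mxE exprS.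
Qed.

Lemma phiM (a b : R) : phi (a * b) = phi a * phi b.
Proof. exact: rmorphM. Qed.
Lemma phiX (a : R) k : phi (a ^+ k) = phi a ^+ k.
Proof. exact: rmorphXn. Qed.
Lemma phi_sum (I : finType) (F : I -> R) : phi (\sum_i F i) = \sum_i phi (F i).
Proof. exact: rmorph_sum. Qed.
Lemma phi_sumo n (F : 'I_n -> R) : phi (\sum_(i < n) F i) = \sum_(i < n) phi (F i).
Proof. exact: rmorph_sum. Qed.

Lemma diag_sum N (d : 'rV[C]_N) (a : nat -> C) n :
  \sum_(k < n) a k *: diag_mx (\row_l (d 0 l ^+ k)) =
  diag_mx (\row_l (\sum_(k < n) a k * d 0 l ^+ k)).
Proof.
apply/matrixP => i j; rewrite summxE !mxE; under eq_bigr do rewrite !mxE.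
case: (i == j); first by apply: eq_bigr => k _; rewrite !mulr1n.
by rewrite mulr0n big1 // => k _; rewrite mulr0n mulr0.
Qed.

Lemma symmetric_diag N (A : 'M[R]_N) : A^T = A ->
  exists d : 'I_N -> R, forall x : 'cV[R]_N, exists w : 'I_N -> R,
    (forall l, 0 <= w l) /\
    forall (n : nat) (g : nat -> R),
      enorm ((\sum_(k < n) g k *: A ^+ k) *m x) ^+ 2 =
      \sum_l (\sum_(k < n) g k * d l ^+ k) ^+ 2 * w l.
Proof.
move=> Asym.
pose Ac := map_mx phi A.
have Aherm : Ac \is hermsymmx.
  apply: realsym_hermsym.
    by apply/is_hermitianmxP; rewrite expr0 scale1r map_mx_id // map_trmx Asym.
  by apply/mxOverP => i j; rewrite mxE phi_real.
have /orthomx_spectralP AcE := hermitian_normalmx Aherm.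
have dreal := hermitian_spectral_diag_real Aherm.
set P := spectralmx Ac in AcE; set dc := spectral_diag Ac in AcE dreal.
have Pu : P \is unitarymx by exact: spectral_unitarymx.
have PV : invmx P = P ^t* by exact: invmx_unitary.
have PPV : P *m invmx P = 1%:M by rewrite mulmxV // unitarymx_unit.
have dcE : forall l, phi (complex.Re (dc 0 l)) = dc 0 l.
  by move=> l; apply: RRe_real; exact: (mxOverP dreal).
exists (fun l => complex.Re (dc 0 l)) => x.
pose u := P *m map_mx phi x.
exists (fun l => complex.Re (`|u l 0| ^+ 2)); split.
  by move=> l; rewrite -ler0c RRe_real ?realX ?normr_real // exprn_ge0.
move=> n g.
apply: (@complexI R); rewrite enorm_sq -nrm2_real.
have AcX : forall k, Ac ^+ k = invmx P *m (diag_mx dc ^+ k) *m P.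
  elim=> [|k IH].
    by rewrite !expr0 mulmx1 mulVmx // unitarymx_unit.
  rewrite exprSr IH {1}AcE -!mulmxE !mulmxA -(mulmxA _ P) PPV mulmx1.
  by rewrite exprSr -!mulmxE !mulmxA.
have mapX : forall k, map_mx phi (A ^+ k) = Ac ^+ k.
  elim=> [|k IH]; first by rewrite !expr0 map_mx1.
  by rewrite !exprS -!mulmxE map_mxM IH.
rewrite map_mxM map_mx_sum.
under eq_bigr do rewrite map_mxZ mapX AcX scalemxAl scalemxAr.
rewrite -mulmx_suml -mulmx_sumr.
under eq_bigr do rewrite diag_pow.
rewrite (diag_sum dc (fun k => phi (g k))) -!mulmxA nrm2_unitary; last first.
  by rewrite PV trmxCK -PV PPV.
rewrite nrm2_diag phi_sum; apply: eq_bigr => l _.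
rewrite phiM phiX RRe_real ?realX ?normr_real //; congr (_ * _).
rewrite mxE real_normK; last first.
  rewrite rpred_sum // => k _; rewrite rpredM ?rpredX ?phi_real //.
  by apply: (mxOverP dreal).
rewrite phi_sum; congr (_ ^+ 2); apply: eq_bigr => k _.
by rewrite phiM phiX dcE.
Qed.
End PartA.

Section PartB.
Variable R : realType.

Lemma enorm_ge0 N (x : 'cV[R]_N) : 0 <= enorm x.
Proof. exact: sqrtr_ge0. Qed.

Lemma sumsq_ge0 N (a : 'I_N -> R) : 0 <= \sum_i a i ^+ 2.
Proof. by apply: sumr_ge0 => i _; exact: sqr_ge0. Qed.

Lemma CS N (a b : 'I_N -> R) :
  (\sum_i a i * b i) ^+ 2 <= (\sum_i a i ^+ 2) * (\sum_i b i ^+ 2).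
Proof.
set p := \sum_i a i ^+ 2; set q := \sum_i b i ^+ 2; set s := \sum_i a i * b i.
have q0 : 0 <= q by exact: sumsq_ge0.
have E : \sum_i (q * a i - s * b i) ^+ 2 = q * (q * p - s ^+ 2).
  transitivity (\sum_i (q ^+ 2 * a i ^+ 2 - (2 * q * s) * (a i * b i) + s ^+ 2 * b i ^+ 2)).
    by apply: eq_bigr => i _; ring.
  rewrite big_split /= sumrB -!mulr_sumr -/p -/q -/s; ring.
have : 0 <= q * (q * p - s ^+ 2) by rewrite -E; exact: sumsq_ge0.
have [qz|qpos] := eqVneq q 0.
  have bz : forall i, b i = 0.
    move=> i; apply/eqP; rewrite -sqrf_eq0; apply/eqP.
    by apply: (psumr_eq0P _ qz) => // j _; exact: sqr_ge0.
  by move=> _; rewrite /s big1 ?expr0n //= ?mulr_ge0 ?sumsq_ge0 // => i _; rewrite bz mulr0.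
have qgt : 0 < q by rewrite lt0r qpos.
by rewrite pmulr_rge0 // subr_ge0 mulrC.
Qed.


Lemma enormE N (x : 'cV[R]_N) : enorm x = Num.sqrt (\sum_i x i 0 ^+ 2).
Proof. by []. Qed.

Lemma enormD N (x y : 'cV[R]_N) : enorm (x + y) <= enorm x + enorm y.
Proof.
rewrite -(@ler_pXn2r _ 2) ?nnegrE ?addr_ge0 ?enorm_ge0 //.
rewrite enorm_sq sqrrD !enorm_sq.
have -> : \sum_i (x + y) i 0 ^+ 2 =
  \sum_i x i 0 ^+ 2 + 2 * \sum_i x i 0 * y i 0 + \sum_i y i 0 ^+ 2.
  rewrite mulr_sumr -!big_split /=; apply: eq_bigr => i _; rewrite !mxE; ring.
rewrite -addrA -[leRHS]addrA lerD2l lerD2r -[X in _ <= X]mulr_natl.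
apply: ler_wpM2l => //.
have := CS (fun i => x i 0) (fun i => y i 0).
rewrite /enorm -sqrtrM ?sumsq_ge0 // => H.
apply: le_trans (ler_norm _) _.
by rewrite -sqrtr_sqr ler_wsqrtr.
Qed.

Lemma enormZ N c (x : 'cV[R]_N) : enorm (c *: x) = `|c| * enorm x.
Proof.
rewrite /enorm -sqrtr_sqr -sqrtrM ?sqr_ge0 // mulr_sumr.
by congr Num.sqrt; apply: eq_bigr => i _; rewrite !mxE exprMn.
Qed.

Lemma enormN N (x : 'cV[R]_N) : enorm (- x) = enorm x.
Proof. by rewrite -scaleN1r enormZ normrN1 mul1r. Qed.

Lemma enormB N (x y : 'cV[R]_N) : enorm (x - y) <= enorm x + enorm y.
Proof. by rewrite -(enormN y) enormD. Qed.

Lemma entry_le_enorm N (x : 'cV[R]_N) i : `|x i 0| <= enorm x.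
Proof.
rewrite -sqrtr_sqr ler_wsqrtr // (bigD1 i) //= lerDl.
by apply: sumr_ge0 => j _; exact: sqr_ge0.
Qed.

Lemma enorm_eq0 N (x : 'cV[R]_N) : enorm x = 0 -> x = 0.
Proof.
move=> H; apply/matrixP => i j; rewrite ord1 mxE.
by apply/eqP; rewrite -normr_le0 -H entry_le_enorm.
Qed.

Lemma enorm_le_sum N (y : 'cV[R]_N) : enorm y <= \sum_i `|y i 0|.
Proof.
rewrite -(@ler_pXn2r _ 2) ?nnegrE ?enorm_ge0 ?sumr_ge0 // enorm_sq expr2 mulr_suml.
by apply: ler_sum => i _; rewrite -real_normK ?num_real // expr2 ler_wpM2l // (bigD1 i) //= lerDl sumr_ge0.
Qed.

Definition mn N (A : 'M[R]_N) := \sum_i \sum_j `|A i j|.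

Lemma mn_ge0 N (A : 'M[R]_N) : 0 <= mn A.
Proof. by apply: sumr_ge0 => i _; apply: sumr_ge0. Qed.

Lemma enorm_mul_le N (A : 'M[R]_N) x : enorm (A *m x) <= mn A * enorm x.
Proof.
apply: le_trans (enorm_le_sum _) _; rewrite /mn mulr_suml; apply: ler_sum => i _.
rewrite mxE mulr_suml; apply: le_trans (ler_norm_sum _ _ _) _; apply: ler_sum => j _.
by rewrite normrM ler_wpM2l // entry_le_enorm.
Qed.


Lemma enorm0 N : enorm (0 : 'cV[R]_N) = 0.
Proof. by rewrite -(scale0r (0 : 'cV[R]_N)) enormZ normr0 mul0r. Qed.

Lemma sumsq_tr N (y : 'cV[R]_N) : \sum_i y i 0 ^+ 2 = (y^T *m y) 0 0.
Proof. by rewrite mxE; apply: eq_bigr => i _; rewrite mxE expr2. Qed.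

Lemma enorm_orth N (Q : 'M[R]_N) x : Q^T *m Q = 1%:M -> enorm (Q *m x) = enorm x.
Proof.
move=> HQ; rewrite /enorm !sumsq_tr trmx_mul mulmxA -(mulmxA _ Q^T) HQ mulmx1 //.
Qed.

Definition bnd N (A : 'M[R]_N) c := forall x, enorm (A *m x) <= c * enorm x.

Lemma bnd_mn N (A : 'M[R]_N) : bnd A (mn A).
Proof. exact: enorm_mul_le. Qed.

Lemma bnd_le N (A : 'M[R]_N) c c' : bnd A c -> c <= c' -> bnd A c'.
Proof. by move=> H cc x; apply: le_trans (H x) _; rewrite ler_wpM2r // enorm_ge0. Qed.

Lemma bndD N (A B : 'M[R]_N) a b : bnd A a -> bnd B b -> bnd (A + B) (a + b).
Proof.
move=> HA HB x; rewrite mulmxDl mulrDl; apply: le_trans (enormD _ _) _.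
exact: lerD.
Qed.

Lemma bndB N (A B : 'M[R]_N) a b : bnd A a -> bnd B b -> bnd (A - B) (a + b).
Proof.
move=> HA HB x; rewrite mulmxBl mulrDl; apply: le_trans (enormB _ _) _.
exact: lerD.
Qed.

Lemma bndZ N (A : 'M[R]_N) a k : bnd A a -> bnd (k *: A) (`|k| * a).
Proof.
by move=> HA x; rewrite -scalemxAl enormZ -mulrA ler_wpM2l.
Qed.

Lemma bndM N (A B : 'M[R]_N) a b : bnd A a -> bnd B b -> 0 <= a -> bnd (A *m B) (a * b).
Proof.
move=> HA HB a0 x; rewrite -mulmxA; apply: le_trans (HA _) _.
by rewrite -mulrA ler_wpM2l.
Qed.

Lemma bnd1 N : bnd (1%:M : 'M[R]_N) 1.
Proof. by move=> x; rewrite mul1mx mul1r. Qed.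

Lemma bndX N (A : 'M[R]_N) a k : bnd A a -> 0 <= a -> bnd (A ^+ k) (a ^+ k).
Proof.
move=> HA a0; elim: k => [|k IH]; first by rewrite !expr0; exact: bnd1.
by rewrite !exprS; apply: bndM.
Qed.

Lemma bnd_sum N n (F : 'I_n -> 'M[R]_N) (c : 'I_n -> R) :
  (forall k, bnd (F k) (c k)) -> bnd (\sum_(k < n) F k) (\sum_(k < n) c k).
Proof.
move=> H; elim: n F c H => [|n IH] F c H.
  by move=> x; rewrite !big_ord0 mul0mx mul0r enorm0.
rewrite !big_ord_recr /=; apply: bndD => //; exact: IH.
Qed.

Lemma bnd_orth N (Q A : 'M[R]_N) a : Q^T *m Q = 1%:M -> bnd A a -> bnd (Q *m A *m Q^T) a.
Proof.
move=> HQ HA x; have HQ' : Q *m Q^T = 1%:M by exact: mulmx1C.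
rewrite -!mulmxA enorm_orth // (le_trans (HA _)) // enorm_orth // trmxK //.
Qed.

Lemma sup_ge0 (E : set R) : (forall y, E y -> 0 <= y) -> 0 <= sup E.
Proof.
move=> H; have [hs|nhs] := pselect (has_sup E); last by rewrite sup_out.
case: (hs) => [[y Ey] ub]; apply: le_trans (H _ Ey) _.
by apply: ub_le_sup.
Qed.

Lemma sup_le (E : set R) c : (forall y, E y -> y <= c) -> 0 <= c -> sup E <= c.
Proof.
move=> H c0; have [[y Ey]|nE] := pselect (E !=set0); first by apply: ge_sup => //; exists y.
have -> : E = set0 by apply/seteqP; split => z Ez //; exfalso; apply: nE; exists z.
by rewrite sup0.
Qed.

Lemma specnorm_ge0 N (A : 'M[R]_N) : 0 <= specnorm A.
Proof. by apply: sup_ge0 => _ [x _ <-]; exact: enorm_ge0. Qed.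

Lemma specnorm_le N (A : 'M[R]_N) c : bnd A c -> 0 <= c -> specnorm A <= c.
Proof.
move=> H c0; apply: sup_le => // _ [x /= x1 <-].
by apply: le_trans (H x) _; rewrite x1 mulr1.
Qed.

Lemma specnorm_bnd N (A : 'M[R]_N) : bnd A (specnorm A).
Proof.
move=> x; have [x0|xn0] := eqVneq (enorm x) 0.
  by rewrite (enorm_eq0 x0) mulmx0 !enorm0 mulr0.
have ex0 : 0 < enorm x by rewrite lt0r xn0 enorm_ge0.
set x' := (enorm x)^-1 *: x.
have x'1 : enorm x' = 1 by rewrite enormZ ger0_norm ?invr_ge0 ?enorm_ge0 // mulVf.
have xE : x = enorm x *: x' by rewrite scalerA divff // scale1r.
rewrite {1}xE -scalemxAr enormZ ger0_norm ?enorm_ge0 // mulrC ler_wpM2r ?enorm_ge0 //.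
apply: ub_le_sup; last by exists x'.
exists (mn A) => _ [z /= z1 <-]; apply: le_trans (enorm_mul_le _ _) _.
by rewrite z1 mulr1.
Qed.

Lemma perm_dist_le N (A Ahat : 'M[R]_N) (s : 'S_N) :
  perm_dist A Ahat <= specnorm ((perm_mx s)^T *m A - Ahat *m (perm_mx s)^T).
Proof.
have -> : perm_dist A Ahat =
   inf [set specnorm ((perm_mx s)^T *m A - Ahat *m (perm_mx s)^T) | s in [set: 'S_N]].
  rewrite /perm_dist; congr inf; apply: eq_imagel => t _.
  rewrite /specnorm; congr sup; apply: eq_imagel => x _.
  by rewrite mulmxBl !mulmxA.
apply: ge_inf; last by exists s.
by exists 0 => _ [t _ <-]; exact: specnorm_ge0.
Qed.

End PartB.

Section PartC.
Variable R : realType.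
Variable h : nat -> R.
Hypothesis ha : analytic_filter h.

Lemma coef_bound (t : R) : exists M, 0 < M /\ forall k, `|h k * t ^+ k| <= M.
Proof.
have := cvg_series_bounded (@ha t) => /ex_strict_bound_gt0 [M M0 HM].
by exists M; split => // k; apply/ltW/(HM k).
Qed.

Lemma entry_pow_bound N (A : 'M[R]_N) k i j : `|(A ^+ k) i j| <= (mn A + 1) ^+ k.
Proof.
elim: k i j => [|k IH] i j.
  rewrite expr0 !mxE; case: (i == j); rewrite /= ?mulr1n ?mulr0n ?normr1 ?normr0 //.
rewrite exprS -mulmxE mxE; apply: le_trans (ler_norm_sum _ _ _) _.
apply: le_trans (_ : \sum_l `|A i l| * (mn A + 1) ^+ k <= _).
  by apply: ler_sum => l _; rewrite normrM ler_wpM2l.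
rewrite -mulr_suml exprS ler_wpM2r ?exprn_ge0 ?addr_ge0 ?mn_ge0 //.
apply: le_trans (_ : mn A <= _); last by rewrite lerDl.
by rewrite /mn [X in _ <= X](bigD1 i) //= lerDl sumr_ge0 // => i' _; rewrite sumr_ge0.
Qed.

Lemma entry_cvg N (A : 'M[R]_N) i j : cvgn (series (fun k => h k * (A ^+ k) i j)).
Proof.
set r := mn A + 1.
have r0 : 0 <= r by rewrite addr_ge0 ?mn_ge0.
have [M [M0 HM]] := coef_bound (2 * r).
apply: normed_cvg.
apply: (@series_le_cvg _ _ (geometric M (2^-1))).
- by move=> k; rewrite normr_ge0.
- by move=> k; rewrite /geometric /= mulr_ge0 ?ltW ?exprn_ge0 ?invr_ge0.
- move=> k; rewrite /geometric /=.
  have := HM k; rewrite normrM exprMn normrM.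
  rewrite (ger0_norm (exprn_ge0 _ (ler0n _ 2))) (ger0_norm (exprn_ge0 _ r0)) => H.
  rewrite normrM; apply: le_trans (_ : `|h k| * r ^+ k <= _).
    by rewrite ler_wpM2l // entry_pow_bound.
  rewrite -(ler_pM2r (exprn_gt0 k (ltr0n _ 2 : (0 : R) < 2))) -mulrA exprVn divfK ?expf_neq0 //.
  by rewrite (mulrC (r ^+ k)).
- by apply: is_cvg_geometric_series; rewrite gtr0_norm ?invr_gt0 // invf_lt1 // ltr1n.
Qed.


Definition Ps N (A : 'M[R]_N) n := \sum_(k < n) h k *: A ^+ k.

Lemma Ps_cvg N (A : 'M[R]_N) i j :
  (fun n => Ps A n i j) @ \oo --> graph_filter h A i j.
Proof.
have -> : (fun n => Ps A n i j) = series (fun k => h k * (A ^+ k) i j).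
  apply/funext => n; rewrite /Ps summxE /series /= big_mkord.
  by apply: eq_bigr => k _; rewrite mxE.
rewrite mxE; exact: entry_cvg.
Qed.

End PartC.

Section PartC2.
Variable R : realType.

Lemma mx_cvg_mulr m n p (M_ : nat -> 'M[R]_(m, n)) (L : 'M[R]_(m, n)) (Q : 'M[R]_(n, p)) :
  (forall i j, (fun k => M_ k i j) @ \oo --> L i j) ->
  forall i j, (fun k => (M_ k *m Q) i j) @ \oo --> (L *m Q) i j.
Proof.
move=> H i j; rewrite mxE; under eq_fun do rewrite mxE.
apply: (@cvg_big _ _ +%R 0 xpredT add_continuous) => // l _.
by apply: cvgM => //; exact: cvg_cst.
Qed.

Lemma mx_cvg_mull m n p (M_ : nat -> 'M[R]_(n, p)) (L : 'M[R]_(n, p)) (Q : 'M[R]_(m, n)) :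
  (forall i j, (fun k => M_ k i j) @ \oo --> L i j) ->
  forall i j, (fun k => (Q *m M_ k) i j) @ \oo --> (Q *m L) i j.
Proof.
move=> H i j; rewrite mxE; under eq_fun do rewrite mxE.
apply: (@cvg_big _ _ +%R 0 xpredT add_continuous) => // l _.
by apply: cvgM => //; exact: cvg_cst.
Qed.

Lemma mx_cvgB m n (M_ M'_ : nat -> 'M[R]_(m, n)) (L L' : 'M[R]_(m, n)) :
  (forall i j, (fun k => M_ k i j) @ \oo --> L i j) ->
  (forall i j, (fun k => M'_ k i j) @ \oo --> L' i j) ->
  forall i j, (fun k => (M_ k - M'_ k) i j) @ \oo --> (L - L') i j.
Proof.
move=> H H' i j; rewrite !mxE; under eq_fun do rewrite !mxE.
exact: (cvgB (H i j) (H' i j)).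
Qed.

Lemma enorm_cvg N (v_ : nat -> 'cV[R]_N) (v : 'cV[R]_N) :
  (forall i, (fun n => v_ n i 0) @ \oo --> v i 0) ->
  (fun n => enorm (v_ n)) @ \oo --> enorm v.
Proof.
move=> H; rewrite /enorm.
apply: (@continuous_cvg _ _ _ _ _ (fun n => \sum_i v_ n i 0 ^+ 2) Num.sqrt).
  exact: sqrt_continuous.
apply: (@cvg_big _ _ +%R 0 xpredT add_continuous) => // i _.
by rewrite expr2; under eq_fun do rewrite expr2; apply: cvgM.
Qed.

End PartC2.

Section PartD.
Variable R : realType.

Lemma spec_lim N (A : 'M[R]_N) (g : nat -> R) (m : R) (y : 'cV[R]_N) :
  A^T = A ->
  (forall l, cvgn (series (fun k => g k * l ^+ k))) ->
  (forall l, `|limn (series (fun k => g k * l ^+ k))| <= m) ->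
  exists a : R, (fun n => enorm ((\sum_(k < n) g k *: A ^+ k) *m y)) @ \oo --> a
                /\ a <= m * enorm y.
Proof.
move=> Asym gc gb.
have m0 : 0 <= m by apply: le_trans (gb 0); exact: normr_ge0.
have [d Hd] := symmetric_diag Asym.
have [w [w0 Hw]] := Hd y.
set gam := fun l => limn (series (fun k => g k * d l ^+ k)).
exists (Num.sqrt (\sum_l gam l ^+ 2 * w l)); split.
  have -> : (fun n => enorm ((\sum_(k < n) g k *: A ^+ k) *m y)) =
     (fun n => Num.sqrt (\sum_l (series (fun k => g k * d l ^+ k) n) ^+ 2 * w l)).
    apply/funext => n; rewrite -(ger0_norm (enorm_ge0 _)) -sqrtr_sqr Hw.
    congr Num.sqrt; apply: eq_bigr => l _; congr (_ ^+ 2 * _).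
    by rewrite /series /= big_mkord.
  apply: (@continuous_cvg _ _ _ _ _
     (fun n => \sum_l (series (fun k => g k * d l ^+ k) n) ^+ 2 * w l) Num.sqrt).
    exact: sqrt_continuous.
  apply: (@cvg_big _ _ +%R 0 xpredT add_continuous) => // l _.
  apply: cvgM; last exact: cvg_cst.
  rewrite expr2; under eq_fun do rewrite expr2.
  by apply: cvgM; exact: gc.
have sw : \sum_l w l = enorm y ^+ 2.
  have := Hw 1%N (fun _ => 1); rewrite big_ord1 scale1r expr0 [_ *m y]mul1mx.
  move=> ->; apply: eq_bigr => l _; rewrite big_ord1 expr0 mul1r expr1n mul1r //.
have -> : m * enorm y = Num.sqrt (m ^+ 2 * enorm y ^+ 2).
  by rewrite -exprMn sqrtr_sqr ger0_norm // mulr_ge0 ?enorm_ge0.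
rewrite ler_wsqrtr // -sw mulr_sumr; apply: ler_sum => l _.
rewrite ler_wpM2r // -real_normK ?num_real //.
by rewrite !expr2 ler_pM ?normr_ge0 ?gb.
Qed.

End PartD.

Section PartE.
Variable R : realType.

Lemma bnd0 N c : 0 <= c -> bnd (0 : 'M[R]_N) c.
Proof. by move=> c0 x; rewrite mul0mx enorm0 mulr_ge0 ?enorm_ge0. Qed.

Lemma powdiff_bnd N (A B : 'M[R]_N) r f k :
  bnd A r -> bnd B r -> bnd (A - B) f -> 1 <= r -> 0 <= f ->
  bnd (A ^+ k - B ^+ k) (k%:R * r ^+ k * f).
Proof.
move=> HA HB HAB r1 f0; have r0 : 0 <= r by apply: le_trans r1.
elim: k => [|k IH].
  by rewrite !expr0 subrr mul0r mul0r; apply: bnd0.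
have -> : A ^+ k.+1 - B ^+ k.+1 = A *m (A ^+ k - B ^+ k) + (A - B) *m B ^+ k.
  by rewrite !exprS !mulmxE mulrBr mulrBl addrA subrK.
apply: bnd_le; first by apply: bndD; [apply: bndM => //; exact: IH | apply: bndM => //; exact: bndX].
have t0 : 0 <= r ^+ k by exact: exprn_ge0.
have k0 : 0 <= k%:R :> R by exact: ler0n.
have H1 : 0 <= f * r ^+ k * (r - 1) by rewrite mulr_ge0 ?mulr_ge0 ?subr_ge0.
rewrite exprS -addn1 natrD; nra.
Qed.

Lemma geom_sum n : \sum_(k < n) (2^-1 : R) ^+ k = 2 - 2 * (2^-1) ^+ n.
Proof.
elim: n => [|n IH]; first by rewrite big_ord0 expr0 mulr1 subrr.
rewrite big_ord_recr /= IH exprSr.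
have h2 : (2 : R) * 2^-1 = 1 by rewrite divff.
set t := (2^-1 : R) ^+ n.
have -> : 2 * (t * 2^-1) = t by rewrite mulrCA h2 mulr1.
lra.
Qed.

Lemma Ps_lip (h : nat -> R) N (A B : 'M[R]_N) r f M :
  bnd A r -> bnd B r -> bnd (A - B) f -> 1 <= r -> 0 <= f ->
  (forall k, `|h k * (4 * r) ^+ k| <= M) ->
  forall n, bnd (Ps h A n - Ps h B n) (2 * M * f).
Proof.
move=> HA HB HAB r1 f0 HM n; have r0 : 0 <= r by apply: le_trans r1.
have M0 : 0 <= M by apply: le_trans (HM 0%N); exact: normr_ge0.
have -> : Ps h A n - Ps h B n = \sum_(k < n) h k *: (A ^+ k - B ^+ k).
  by rewrite /Ps -sumrB; apply: eq_bigr => k _; rewrite scalerBr.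
apply: bnd_le.
  apply: bnd_sum => k; apply: bndZ; apply: powdiff_bnd; eassumption.
apply: le_trans (_ : \sum_(k < n) M * (2^-1) ^+ k * f <= _).
  apply: ler_sum => k _; rewrite !mulrA ler_wpM2r //.
  have := HM k; rewrite normrM normrX (ger0_norm (_ : 0 <= 4 * r)) ?mulr_ge0 //.
  rewrite exprMn => H.
  have k2 : k%:R <= (2 : R) ^+ k.
    by rewrite -natrX ler_nat ltnW // ltn_expl.
  have h0 : 0 <= `|h k| * r ^+ k by rewrite mulr_ge0 ?exprn_ge0.
  have e4 : (4 : R) ^+ k = 2 ^+ k * 2 ^+ k.
    by rewrite -exprMn; congr (_ ^+ _); rewrite -natrM.
  have p2 : 0 < (2 : R) ^+ k by rewrite exprn_gt0.
  rewrite -(ler_pM2r p2) exprVn divfK ?gt_eqF //.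
  apply: le_trans H; rewrite e4.
  have -> : `|h k| * k%:R * r ^+ k * 2 ^+ k = (`|h k| * r ^+ k) * (k%:R * 2 ^+ k) by ring.
  have -> : `|h k| * (2 ^+ k * 2 ^+ k * r ^+ k) = (`|h k| * r ^+ k) * (2 ^+ k * 2 ^+ k) by ring.
  by rewrite ler_wpM2l // ler_wpM2r ?exprn_ge0.
rewrite -mulr_suml -mulr_sumr geom_sum ler_wpM2r // mulrC ler_wpM2r //.
by rewrite gerBl mulr_ge0 ?exprn_ge0 ?invr_ge0.
Qed.

End PartE.

Section PartF.
Variable R : realType.

Lemma bndN N (A : 'M[R]_N) a : bnd A a -> bnd (- A) a.
Proof. by move=> H x; rewrite mulNmx enormN. Qed.

Lemma conj_pow N (Q A : 'M[R]_N) k : Q^T *m Q = 1%:M ->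
  (Q *m A *m Q^T) ^+ k = Q *m A ^+ k *m Q^T.
Proof.
move=> HQ; have HQ' : Q *m Q^T = 1%:M by exact: mulmx1C.
elim: k => [|k IH]; first by rewrite !expr0 [_ *m 1]mulmx1 HQ'.
rewrite exprS IH !exprS -!mulmxE !mulmxA -(mulmxA _ Q^T Q) HQ mulmx1 //.
Qed.

Lemma Ps_conj (h : nat -> R) N (Q A : 'M[R]_N) n : Q^T *m Q = 1%:M ->
  Ps h (Q *m A *m Q^T) n = Q *m Ps h A n *m Q^T.
Proof.
move=> HQ; rewrite /Ps mulmx_sumr mulmx_suml; apply: eq_bigr => k _.
by rewrite conj_pow // scalemxAl scalemxAr.
Qed.

Lemma perm_orth N (s : 'S_N) : (perm_mx s)^T *m perm_mx s = 1%:M :> 'M[R]_N.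
Proof. by rewrite tr_perm_mx -perm_mxM mulVg perm_mx1. Qed.

Lemma lim_bound N (X : 'M[R]_N) (v_ : nat -> 'cV[R]_N) x (b_ : nat -> R) a :
  (forall i, (fun n => v_ n i 0) @ \oo --> (X *m x) i 0) ->
  b_ @ \oo --> a -> (forall n, enorm (v_ n) <= b_ n) -> enorm (X *m x) <= a.
Proof.
move=> Hv Hb Hle; apply: (ler_cvg_to (enorm_cvg Hv) Hb).
by apply: nearW.
Qed.


Lemma lipb (C e sg u l : R) : 0 < C -> 0 <= e -> e < 4^-1 -> (sg = 1 \/ sg = -1) ->
  0 <= u -> u * (`|l + (1 + 2 * (sg * e)) * l| / 2) <= C * `|(1 + 2 * (sg * e)) * l - l| ->
  l != 0 -> u <= 2 * C * e + 4 * C * (e * e).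
Proof.
move=> C0 e0 e4 hsg u0 H ln0.
have t0 : 0 < `|l| by rewrite normr_gt0.
have hC : 0 <= C * (e * e) * (1 - 2 * e).
  by apply: mulr_ge0; [apply: mulr_ge0; [lra | nra] | lra].
have n2 : `|2 * e| = 2 * e by apply: ger0_norm; lra.
case: hsg => hs; subst sg.
- have E1 : l + (1 + 2 * (1 * e)) * l = (2 + 2 * e) * l by ring.
  have E2 : (1 + 2 * (1 * e)) * l - l = (2 * e) * l by ring.
  have n1 : `|2 + 2 * e| = 2 + 2 * e by apply: ger0_norm; lra.
  rewrite E1 E2 (normrM (2 + 2 * e)) (normrM (2 * e)) n1 n2 in H.
  have H' : (u * (1 + e)) * `|l| <= (2 * C * e) * `|l|.
    rewrite (_ : u * (1 + e) * `|l| = u * ((2 + 2 * e) * `|l| / 2)); last by field.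
    by rewrite (_ : 2 * C * e * `|l| = C * (2 * e * `|l|)) //; ring.
  rewrite ler_pM2r // in H'.
  nra.
- have E1 : l + (1 + 2 * (-1 * e)) * l = (2 - 2 * e) * l by ring.
  have E2 : (1 + 2 * (-1 * e)) * l - l = (- (2 * e)) * l by ring.
  have n1 : `|2 - 2 * e| = 2 - 2 * e by apply: ger0_norm; lra.
  rewrite E1 E2 (normrM (2 - 2 * e)) (normrM (- (2 * e))) normrN n1 n2 in H.
  have H' : (u * (1 - e)) * `|l| <= (2 * C * e) * `|l|.
    rewrite (_ : u * (1 - e) * `|l| = u * ((2 - 2 * e) * `|l| / 2)); last by field.
    by rewrite (_ : 2 * C * e * `|l| = C * (2 * e * `|l|)) //; ring.
  rewrite ler_pM2r // in H'.
  nra.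
Qed.

End PartF.

Lemma bndN_sub (R : realType) N (A B : 'M[R]_N) f : bnd (A - B) f -> bnd (B - A) f.
Proof. by move=> H; rewrite -opprB; apply: bndN. Qed.

Lemma exprZmx (R : realType) N (c : R) (A : 'M[R]_N) k : (c *: A) ^+ k = c ^+ k *: A ^+ k.
Proof.
elim: k => [|k IH]; first by rewrite !expr0 scale1r.
rewrite exprS IH [in RHS]exprS [A ^+ k.+1]exprS -[(c *: A) * _]/(mulmx _ _) -[A * _]/(mulmx _ _).
by rewrite -scalemxAl -scalemxAr scalerA.
Qed.

Theorem theorem3 (R : realType) (N : nat) (S V Lam : 'M[R]_N)
  (h : nat -> R) (C : R) :
  symmetric_mx S -> orthonormal_mx V -> is_diag_mx Lam ->
  S = V *m Lam *m V^T ->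
  analytic_filter h -> bounded_filter h -> integral_lipschitz h C ->
  exists K : R,
    forall (Shat E U M : 'M[R]_N) (eps : R),
      symmetric_mx Shat ->
      orthonormal_mx U -> is_diag_mx M -> E = U *m M *m U^T ->
      E \in rel_pert_set S Shat ->
      rel_pert_dist S Shat <= specnorm E ->
      specnorm E <= eps ->
      Num.min (specnorm ((specnorm E)^-1 *: E - 1%:M))
              (specnorm ((specnorm E)^-1 *: E + 1%:M)) <= eps ->
      perm_dist (graph_filter h S) (graph_filter h Shat)
        <= 2 * C * eps + K * eps ^+ 2.
Proof.
move=> Ssym _ _ _ ha hb [C0 hlip].
set s := mn S.
have s0 : 0 <= s by exact: mn_ge0.
set r := 2 * s + 2.
have r1 : 1 <= r by rewrite /r; lra.
have [Mb [Mb0 HMb]] := coef_bound ha (4 * r).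
exists (4 * C + 2 * (2 * Mb) * s + 32).
move=> Shat E U M eps Shsym _ _ _ Ein _ Ee Emin.
have [s1 Hs0] := set_mem Ein.
set P := perm_mx s1 in Hs0 *.
have PtP : P^T *m P = 1%:M := @perm_orth R N s1.
have PPt : P *m P^T = 1%:M by exact: mulmx1C.
set e := specnorm E in Ee Emin *.
have e0 : 0 <= e by exact: specnorm_ge0.
have eps0 : 0 <= eps by apply: le_trans Ee.
set Sh0 := P *m S *m P^T.
have Sh0sym : Sh0^T = Sh0 by rewrite /Sh0 !trmx_mul trmxK Ssym mulmxA.
have HSh0 : bnd Sh0 s by apply: bnd_orth => //; exact: bnd_mn.
apply: le_trans (perm_dist_le _ _ s1^-1) _.
rewrite tr_perm_mx invgK -/P.
set X := P *m graph_filter h S - graph_filter h Shat *m P.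
have conv : forall (x : 'cV[R]_N) i, (fun n => ((Ps h Sh0 n - Ps h Shat n) *m (P *m x)) i 0)
     @ \oo --> (X *m x) i 0.
  move=> x; have eq : forall n, (Ps h Sh0 n - Ps h Shat n) *m (P *m x) =
      (P *m Ps h S n - Ps h Shat n *m P) *m x.
    by move=> n; rewrite Ps_conj // mulmxA mulmxBl -(mulmxA _ P^T P) PtP mulmx1.
  move=> i; under eq_fun do rewrite eq.
  apply: mx_cvg_mulr => i' j'; apply: mx_cvgB => i'' j'';
    [apply: mx_cvg_mull | apply: mx_cvg_mulr] => a b; exact: Ps_cvg.
have [epsL|epsS] := lerP (4^-1) eps.
  apply: le_trans (_ : specnorm X <= 2) _.
    apply: specnorm_le => // x.
    have [a1 [Ha1 Ha1b]] := @spec_lim _ _ Sh0 h 1 (P *m x) Sh0sym ha hb.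
    have [a2 [Ha2 Ha2b]] := @spec_lim _ _ Shat h 1 (P *m x) Shsym ha hb.
    rewrite enorm_orth // mul1r in Ha1b Ha2b.
    apply: le_trans (_ : enorm (X *m x) <= a1 + a2) _; last lra.
    apply: (lim_bound (conv x) (cvgD Ha1 Ha2)) => n /=.
    rewrite /Ps mulmxBl; apply: le_trans (enormB _ _) _; exact: lexx.
  have h1 : 1 <= 16 * eps ^+ 2 by nra.
  have h2 : 0 <= C * eps by rewrite mulr_ge0 // ltW.
  have h3 : 0 <= (4 * C + 2 * (2 * Mb) * s) * eps ^+ 2.
    by apply: mulr_ge0; [nra | exact: exprn_ge0].
  nra.
have eS : e < 4^-1 by apply: le_lt_trans Ee epsS.
have [sg [hsg Dn]] : exists sg : R, (sg = 1 \/ sg = -1) /\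
    specnorm (e^-1 *: E - sg *: 1%:M) <= eps.
  move: Emin; rewrite ge_min => /orP [H|H].
    by exists 1; split; [left | rewrite scale1r].
  by exists (-1); split; [right | rewrite scaleN1r opprK].
set D := e^-1 *: E - sg *: 1%:M in Dn.
have HD : bnd D eps := bnd_le (specnorm_bnd D) Dn.
set F := E - (sg * e) *: 1%:M.
have HF : bnd F (e * eps).
  have [ez|enz] := eqVneq e 0.
    rewrite /F ez mulr0 scale0r subr0 mul0r.
    by have := specnorm_bnd E; rewrite -/e ez.
  have -> : F = e *: D.
    by rewrite /F /D scalerBr scalerA mulfV // scale1r scalerA mulrC.
  by rewrite -[X in bnd _ (X * _)](ger0_norm e0); apply: bndZ.
set c := 1 + 2 * (sg * e).
set S' := S + (E *m S + S *m E) in Hs0.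
have S'E : S' - c *: S = F *m S + S *m F.
  rewrite /F mulmxBl mulmxBr -scalemxAl -scalemxAr mul1mx mulmx1 /S' /c.
  by apply/matrixP => i j; rewrite !mxE; ring.
set f := 2 * (eps * eps) * s.
have f0 : 0 <= f by rewrite /f; nra.
have Hf : bnd (S' - c *: S) f.
  rewrite S'E; apply: bnd_le.
    by apply: bndD; [apply: (bndM HF (bnd_mn S)); nra | apply: (bndM (bnd_mn S) HF)].
  have hh : 0 <= (eps - e) * (eps * s) by apply: mulr_ge0; [lra | nra].
  by rewrite /f -/s; nra.
have ShatE : Shat = P *m S' *m P^T.
  by rewrite -Hs0 !mulmxA PPt mul1mx -mulmxA PPt mulmx1.
have Hdiff : bnd (Shat - c *: Sh0) f.
  have -> : Shat - c *: Sh0 = P *m (S' - c *: S) *m P^T.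
    by rewrite ShatE /Sh0 mulmxBr mulmxBl -scalemxAr -scalemxAl.
  exact: bnd_orth.
have cb : 1 / 2 <= c <= 3 / 2 by rewrite /c; case: hsg => ->; apply/andP; split; lra.
have cn : `|c| <= 3 / 2 by rewrite ger0_norm; case/andP: cb => *; lra.
have HcSh : bnd (c *: Sh0) r.
  apply: bnd_le; first exact: bndZ.
  by rewrite /r -/s; nra.
have HShat : bnd Shat r.
  have -> : Shat = c *: Sh0 + (Shat - c *: Sh0) by rewrite addrC subrK.
  apply: bnd_le; first exact: (bndD (bndZ c HSh0) Hdiff).
  have e16 : eps * eps <= 1 / 16 by nra.
  have hh : 0 <= (1 / 16 - eps * eps) * s by apply: mulr_ge0; lra.
  by rewrite /r /f -/s; nra.
have Hlip := Ps_lip HcSh HShat (bndN_sub Hdiff) r1 f0 HMb.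
set g := fun k => h k * (1 - c ^+ k).
set m := 2 * C * e + 4 * C * (e * e).
have gser : forall l, series (fun k => g k * l ^+ k) =
    (fun n => series (fun k => h k * l ^+ k) n - series (fun k => h k * (c * l) ^+ k) n).
  move=> l; apply/funext => n; rewrite /series /= -sumrB.
  by apply: eq_bigr => k _; rewrite /g exprMn; ring.
have gcv : forall l, series (fun k => g k * l ^+ k) @ \oo -->
    freq_resp h l - freq_resp h (c * l).
  by move=> l; rewrite gser; exact: (cvgB (ha l) (ha (c * l))).
have gc : forall l, cvgn (series (fun k => g k * l ^+ k)).
  by move=> l; apply: cvgP (gcv l).
have gb : forall l, `|limn (series (fun k => g k * l ^+ k))| <= m.
  move=> l; rewrite (cvg_lim _ (gcv l)) //.
  have [lz|lnz] := eqVneq l 0.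
    rewrite lz mulr0 subrr normr0 /m; nra.
  rewrite distrC; apply: (lipb C0 e0 eS hsg (normr_ge0 _) _ lnz).
  exact: hlip.
have gE : forall n, Ps h Sh0 n - Ps h (c *: Sh0) n = \sum_(k < n) g k *: Sh0 ^+ k.
  move=> n; rewrite /Ps -sumrB; apply: eq_bigr => k _.
  by rewrite exprZmx scalerA -scalerBl /g mulrBr mulr1.
have m0 : 0 <= m by rewrite /m; nra.
apply: le_trans (_ : specnorm X <= m + 2 * Mb * f) _.
  apply: specnorm_le; last by rewrite addr_ge0 // !mulr_ge0 // ltW.
  move=> x.
  have [a1 [Ha1 Ha1b]] := @spec_lim _ _ Sh0 g m (P *m x) Sh0sym gc gb.
  rewrite enorm_orth // in Ha1b.
  apply: le_trans (_ : enorm (X *m x) <= a1 + 2 * Mb * f * enorm x) _; last first.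
    by rewrite mulrDl; lra.
  apply: (lim_bound (conv x) (cvgD Ha1 (cvg_cst (2 * Mb * f * enorm x)))) => n.
  rewrite (_ : Ps h Sh0 n - Ps h Shat n =
     (Ps h Sh0 n - Ps h (c *: Sh0) n) + (Ps h (c *: Sh0) n - Ps h Shat n));
    last by rewrite addrA subrK.
  rewrite mulmxDl; apply: le_trans (enormD _ _) _; rewrite gE.
  apply: lerD; first exact: lexx.
  by apply: le_trans (Hlip n _) _; rewrite enorm_orth.
have h1 : 0 <= C * (eps - e) by apply: mulr_ge0; lra.
have h2 : 0 <= C * ((eps - e) * (eps + e)) by apply: mulr_ge0; [lra | apply: mulr_ge0; lra].
have h3 : 0 <= eps ^+ 2 by exact: sqr_ge0.
rewrite /m /f; nra.
Qed.
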